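(* Let $P,C$ be causal stable systems on $\mathcal{L}_{2e+}^n$ such that $P\#C$ is well-posed and the single-loop feedback system $P\#C|_{e_2=0}$ is stable, and assume $\theta(P)+\theta(C)\le\pi$. Let $G:e_1\mapsto y_1$ be the closed-loop map of $P\#C|_{e_2=0}$. Then $$\theta(G)\le\max\{\theta(P),\theta(C)\}.$$
   Context: For $n\ge1$, $\mathcal{L}_2^n$ is the set of measurable $u:\mathbb{R}\to\mathbb{R}^n$ with $\|u\|_2^2=\int|u(t)|^2dt<\infty$, inner product $\langle u,v\rangle=\int u(t)^Tv(t)\,dt$; $\mathcal{L}_{2+}=\{u\in\mathcal{L}_2:u(t)=0\ \text{for}\ t<0\}$. For $T\ge0$, $(\Gamma_Tu)(t)=u(t)$ for $t\le T$, $0$ for $t>T$; $\mathcal{L}_{2e+}=\{u:\Gamma_Tu\in\mathcal{L}_{2+}\ \forall T\ge0\}$. A system is an operator $P:\mathcal{L}_{2e+}\to\mathcal{L}_{2e+}$ with $P0=0$, $P\ne0$; causal if $\Gamma_TP=\Gamma_TP\Gamma_T$ for all $T\ge 0$; a causal system is stable if $Pu\in\mathcal{L}_{2+}$ for all $u\in\mathcal{L}_{2+}$ and $\sup_{0\ne u\in\mathcal{L}_{2+}}\|Pu\|_2/\|u\|_2<\infty$. The singular angle $\theta(P)\in[0,\pi]$ is given by $\cos\theta(P)=\inf\{\langle u,Pu\rangle/(\|u\|_2\|Pu\|_2):0\neq u\in\mathcal{L}_{2+},\ Pu\ne0\}$. The feedback system $P\#C$: $u_1=e_1-y_2$, $u_2=e_2+y_1$,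 $y_1=Pu_1$, $y_2=Cu_2$; well-posed if $(u_1,u_2)\mapsto(u_1+Cu_2,\ u_2-Pu_1)$ has a causal inverse on $\mathcal{L}_{2e+}\times\mathcal{L}_{2e+}$. $P\#C|_{e_2=0}$ is the loop with $e_2=0$; it is stable if there is $c>0$ with $\|\Gamma_T(u_1,u_2)\|_2\le c\|\Gamma_Te\|_2$ for all $T\ge0$ and all $e=(e_1,0)$, $e_1\in\mathcal{L}_{2e+}$. *)

(* Defs.v *)
From HB Require Import structures.
From mathcomp Require Import all_boot all_order all_algebra.
From mathcomp Require Import all_classical all_reals all_analysis.
Set Implicit Arguments. Unset Strict Implicit. Unset Printing Implicit Defensive.
Import Order.TTheory GRing.Theory Num.Theory.
Import numFieldNormedType.Exports.
Local Open Scope classical_set_scope.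
Local Open Scope ring_scope.

Section Signals.
Variables (R : realType) (n : nat).

Definition signal := R -> 'rV[R]_n.
Definition sig0 : signal := fun _ => 0.

Definition sqn (x : 'rV[R]_n) : R := \sum_(i < n) (x 0 i) ^+ 2.
Definition dotv (x y : 'rV[R]_n) : R := \sum_(i < n) x 0 i * y 0 i.

(* equality of signals almost everywhere (L2 elements are classes) *)
Definition eqae (u v : signal) : Prop :=
  (@lebesgue_measure R).-negligible [set t | u t <> v t].

Definition L2 (u : signal) : Prop :=
  (forall i : 'I_n, measurable_fun setT (fun t => u t 0 i)) /\
  (\int[@lebesgue_measure R]_(t in setT) (sqn (u t))%:E < +oo)%E.

Definition L2plus (u : signal) : Prop :=
  L2 u /\ (@lebesgue_measure R).-negligible [set t | t < 0 /\ u t <> 0].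

Definition norm2 (u : signal) : R :=
  Num.sqrt (fine (\int[@lebesgue_measure R]_(t in setT) (sqn (u t))%:E)).

Definition ip (u v : signal) : R :=
  fine (\int[@lebesgue_measure R]_(t in setT) (dotv (u t) (v t))%:E).

Definition trunc (T : R) (u : signal) : signal :=
  fun t => if t <= T then u t else 0.

Definition L2e (u : signal) : Prop := forall T, 0 <= T -> L2plus (trunc T u).

Definition is_system (P : signal -> signal) : Prop :=
  (forall u, L2e u -> L2e (P u)) /\
  (forall u v, L2e u -> L2e v -> eqae u v -> eqae (P u) (P v)) /\
  eqae (P sig0) sig0 /\
  ~ (forall u, L2e u -> eqae (P u) sig0).

Definition causal (P : signal -> signal) : Prop :=
  is_system P /\
  forall T u, 0 <= T -> L2e u ->
    eqae (trunc T (P u)) (trunc T (P (trunc T u))).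

Definition stable (P : signal -> signal) : Prop :=
  causal P /\
  (forall u, L2plus u -> L2plus (P u)) /\
  exists c : R, forall u, L2plus u -> ~ eqae u sig0 ->
    norm2 (P u) / norm2 u <= c.

Definition angle_set (P : signal -> signal) : set R :=
  [set r | exists u, L2plus u /\ ~ eqae u sig0 /\ ~ eqae (P u) sig0 /\
           r = ip u (P u) / (norm2 u * norm2 (P u))].

Definition sangle (P : signal -> signal) : R := acos (inf (angle_set P)).

Definition psig := (signal * signal)%type.
Definition eqae2 (x y : psig) : Prop := eqae x.1 y.1 /\ eqae x.2 y.2.
Definition L2e2 (x : psig) : Prop := L2e x.1 /\ L2e x.2.
Definition trunc2 (T : R) (x : psig) : psig := (trunc T x.1, trunc T x.2).
Definition norm2p (x : psig) : R := Num.sqrt (norm2 x.1 ^+ 2 + norm2 x.2 ^+ 2).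

Definition fb_map (P C : signal -> signal) (x : psig) : psig :=
  (x.1 \+ C x.2, x.2 \- P x.1).

Definition causal_inverse (F Phi : psig -> psig) : Prop :=
  (forall x, L2e2 x -> L2e2 (Phi x)) /\
  (forall x y, L2e2 x -> L2e2 y -> eqae2 x y -> eqae2 (Phi x) (Phi y)) /\
  (forall x, L2e2 x -> eqae2 (F (Phi x)) x) /\
  (forall x, L2e2 x -> eqae2 (Phi (F x)) x) /\
  (forall T x, 0 <= T -> L2e2 x ->
     eqae2 (trunc2 T (Phi x)) (trunc2 T (Phi (trunc2 T x)))).

Definition well_posed_with (P C : signal -> signal) (Phi : psig -> psig) : Prop :=
  causal_inverse (fb_map P C) Phi.

Definition loop_e2_0_stable (Phi : psig -> psig) : Prop :=
  exists c : R, 0 < c /\ forall T e1, 0 <= T -> L2e e1 ->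
    norm2p (trunc2 T (Phi (e1, sig0))) <= c * norm2p (trunc2 T (e1, sig0)).

Definition closed_loop_G (P : signal -> signal) (Phi : psig -> psig) :
  signal -> signal := fun e1 => P (Phi (e1, sig0)).1.

End Signals.

(* Main.v *)
Require Import Defs.
From HB Require Import structures.
From mathcomp Require Import all_boot all_order all_algebra.
From mathcomp Require Import all_classical all_reals all_analysis.
From mathcomp Require Import measurable_realfun.
From mathcomp.algebra_tactics Require Import ring lra.
Import Order.TTheory GRing.Theory Num.Theory.
Import numFieldNormedType.Exports.
Local Open Scope classical_set_scope.
Local Open Scope ring_scope.
Set Implicit Arguments. Unset Strict Implicit. Unset Printing Implicit Defensive.

Section Alg.
Variable R : realType.
Implicit Types A B Y X p q U V W : R.

Lemma psd2 U V W : (forall a b : R, 0 <= a^+2 * U + 2 * a * b * V + b^+2 * W) ->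
  [/\ 0 <= U, 0 <= W & V^+2 <= U * W].
Proof.
move=> H.
have U0 : 0 <= U by have := H 1 0; lra.
have W0 : 0 <= W by have := H 0 1; lra.
split => //.
have [Wp|] := ltP 0 W.
  have := H W (- V).
  have -> : W ^+ 2 * U + 2 * W * - V * V + (- V) ^+ 2 * W = W * (U * W - V^+2) by ring.
  by rewrite pmulr_rge0 // subr_ge0.
move=> Wle; have W00 : W = 0 by lra.
rewrite W00 mulr0.
have [V0|V0] := eqVneq V 0; first by rewrite V0 expr0n.
have := H 1 (- (U + 1) / (2 * V)).
have -> : 1 ^+ 2 * U + 2 * 1 * (- (U + 1) / (2 * V)) * V + (- (U + 1) / (2 * V)) ^+ 2 * W
  = -1.
  by rewrite W00; field.
by lra.
Qed.

Lemma psd2_sqrt U V W : (forall a b : R, 0 <= a^+2 * U + 2 * a * b * V + b^+2 * W) ->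
  `|V| <= Num.sqrt U * Num.sqrt W.
Proof.
move=> /psd2 [U0 W0 H].
rewrite -sqrtrM // -sqrtr_sqr.
by rewrite ler_sqrt // mulr_ge0.
Qed.

Lemma sq_le_le (x y : R) : 0 <= x -> 0 <= y -> y ^+ 2 <= x ^+ 2 -> y <= x.
Proof. move=> x0 y0 h; nra. Qed.

Lemma le_sq (x y : R) : 0 <= y -> y <= x -> y ^+ 2 <= x ^+ 2.
Proof. move=> y0 h; nra. Qed.

Lemma geom A B Y X p q (cP cC : R) :
 (forall a b c : R, 0 <= a ^+ 2 * A + b ^+ 2 * B + c ^+ 2 * Y + 2 * a * b * X + 2 * a * c * p + 2 * b * c * q) ->
 -1 <= cP -> cP <= cC -> (cP < 0 -> - cP <= cC) ->
 cP * (Num.sqrt A * Num.sqrt Y) <= p -> cC * (Num.sqrt B * Num.sqrt Y) <= q ->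
 cP * (Num.sqrt (A + 2*X + B) * Num.sqrt Y) <= p + q.
Proof.
move=> H cP1 cPC cPn hp hq.
have A0 : 0 <= A by have := H 1 0 0; lra.
have B0 : 0 <= B by have := H 0 1 0; lra.
have Y0 : 0 <= Y by have := H 0 0 1; lra.
have S0 : 0 <= A + 2 * X + B by have := H 1 1 0; lra.
have sA := sqrtr_ge0 A; have sB := sqrtr_ge0 B; have sY := sqrtr_ge0 Y.
have sS := sqrtr_ge0 (A + 2 * X + B).
have eA := sqr_sqrtr A0; have eB := sqr_sqrtr B0; have eY := sqr_sqrtr Y0.
have eS := sqr_sqrtr S0.
have [cP0|cPneg] := leP 0 cP.
  have hX : `|X| <= Num.sqrt A * Num.sqrt B.
    apply: psd2_sqrt => a b; have := H a b 0; lra.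
  have hXX : X <= Num.sqrt A * Num.sqrt B by move: hX; rewrite ler_norml; lra.
  have hs : Num.sqrt (A + 2 * X + B) <= Num.sqrt A + Num.sqrt B.
    apply: sq_le_le; [lra|lra|]. rewrite eS; nra.
  have h1 : cP * (Num.sqrt (A + 2 * X + B) * Num.sqrt Y) <=
            cP * ((Num.sqrt A + Num.sqrt B) * Num.sqrt Y).
    by apply: ler_wpM2l => //; apply: ler_wpM2r.
  have h2 : cP * (Num.sqrt B * Num.sqrt Y) <= cC * (Num.sqrt B * Num.sqrt Y).
    by apply: ler_wpM2r => //; apply: mulr_ge0.
  lra.
have mu1 := cPn cPneg.
have [pq0|pqn] := leP 0 (p + q).
  have : cP * (Num.sqrt (A + 2 * X + B) * Num.sqrt Y) <= 0.
    by apply: mulr_le0_ge0; [lra| apply: mulr_ge0].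
  lra.
set mu := - cP.
have mu0 : 0 < mu by rewrite /mu; lra.
have mu1' : mu <= 1 by rewrite /mu; lra.
have q0 : mu * (Num.sqrt B * Num.sqrt Y) <= q.
  apply: le_trans hq; apply: ler_wpM2r; [exact: mulr_ge0| rewrite /mu; lra].
have q00 : 0 <= q by have := mulr_ge0 (ltW mu0) (mulr_ge0 sB sY); lra.
have p0 : p < 0 by lra.
have [Yz|Yp] := eqVneq Y 0.
  have hp' : `|p| <= Num.sqrt A * Num.sqrt Y.
    apply: psd2_sqrt => a c; have := H a 0 c; lra.
  move: hp'; rewrite Yz sqrtr0 mulr0 normr_le0 => /eqP; lra.
have Ypos : 0 < Y by rewrite lt_neqAle eq_sym Yp Y0.
set Aa := A * Y - p ^+ 2; set Bb := B * Y - q ^+ 2; set Xx := X * Y - p * q.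
have Hab : forall a b : R, 0 <= a ^+ 2 * Aa + 2 * a * b * Xx + b ^+ 2 * Bb.
  move=> a b; have := H a b (- (a * p + b * q) / Y).
  have -> : a ^+ 2 * A + b ^+ 2 * B + (- (a * p + b * q) / Y) ^+ 2 * Y + 2 * a * b * X +
      2 * a * (- (a * p + b * q) / Y) * p + 2 * b * (- (a * p + b * q) / Y) * q
      = (a ^+ 2 * Aa + 2 * a * b * Xx + b ^+ 2 * Bb) / Y.
    by rewrite /Aa /Bb /Xx; field.
  by rewrite pmulr_lge0 // invr_gt0.
have [Aa0 Bb0 _] := psd2 Hab.
have hXx : `|Xx| <= Num.sqrt Aa * Num.sqrt Bb by exact: psd2_sqrt.
have hXx' : - Xx <= Num.sqrt Aa * Num.sqrt Bb by move: hXx; rewrite ler_norml; lra.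
have sAa := sqrtr_ge0 Aa; have sBb := sqrtr_ge0 Bb.
have eAa := sqr_sqrtr Aa0; have eBb := sqr_sqrtr Bb0.
have SY : (A + 2 * X + B) * Y = (p + q) ^+ 2 + Aa + Bb + 2 * Xx.
  by rewrite /Aa /Bb /Xx; ring.
have hp2 : p ^+ 2 <= mu ^+ 2 * (A * Y).
  have h : - p <= mu * (Num.sqrt A * Num.sqrt Y) by rewrite /mu; lra.
  have h0 : 0 <= mu * (Num.sqrt A * Num.sqrt Y) by lra.
  have hp0 : 0 <= - p by lra.
  have := le_sq hp0 h; rewrite sqrrN.
  by rewrite !exprMn eA eY.
have hq2 : mu ^+ 2 * (B * Y) <= q ^+ 2.
  have h0 : 0 <= mu * (Num.sqrt B * Num.sqrt Y) by apply: mulr_ge0; [lra | exact: mulr_ge0].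
  have := le_sq h0 q0.
  by rewrite !exprMn eB eY.
have s1 : 0 <= 1 - mu ^+ 2 by nra.
set s := Num.sqrt (1 - mu ^+ 2).
have s0 : 0 <= s := sqrtr_ge0 _.
have es : s ^+ 2 = 1 - mu ^+ 2 := sqr_sqrtr s1.
have ha : s * (- p) <= mu * Num.sqrt Aa.
  apply: sq_le_le; [nra|nra|].
  rewrite !exprMn es eAa sqrrN /Aa; nra.
have hb : mu * Num.sqrt Bb <= s * q.
  apply: sq_le_le; [nra|nra|].
  rewrite !exprMn es eBb /Bb; nra.
have hd : s * (- (p + q)) <= mu * (Num.sqrt Aa - Num.sqrt Bb) by nra.
have hd2 : s ^+ 2 * (p + q) ^+ 2 <= mu ^+ 2 * (Num.sqrt Aa - Num.sqrt Bb) ^+ 2.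
  have h0 : 0 <= s * (- (p + q)) by nra.
  have := le_sq h0 hd.
  by rewrite !exprMn sqrrN.
have key : (p + q) ^+ 2 <= mu ^+ 2 * ((A + 2 * X + B) * Y).
  rewrite SY; rewrite es in hd2.
  have h3 : (Num.sqrt Aa - Num.sqrt Bb) ^+ 2 <= Aa + Bb + 2 * Xx by nra.
  have h4 : mu ^+ 2 * (Num.sqrt Aa - Num.sqrt Bb) ^+ 2 <= mu ^+ 2 * (Aa + Bb + 2 * Xx).
    by apply: ler_wpM2l => //; apply: sqr_ge0.
  have -> : mu ^+ 2 * ((p + q) ^+ 2 + Aa + Bb + 2 * Xx) =
    mu ^+ 2 * (p + q) ^+ 2 + mu ^+ 2 * (Aa + Bb + 2 * Xx) by ring.
  have e5 : (1 - mu ^+ 2) * (p + q) ^+ 2 = (p + q) ^+ 2 - mu ^+ 2 * (p + q) ^+ 2 by ring.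
  rewrite e5 in hd2.
  lra.
have fin : - (p + q) <= mu * (Num.sqrt (A + 2 * X + B) * Num.sqrt Y).
  apply: sq_le_le; [exact: mulr_ge0 (ltW mu0) (mulr_ge0 sS sY)|lra|].
  by rewrite sqrrN !exprMn eS eY.
rewrite /mu in fin; lra.
Qed.

Lemma geom_min A B Y X p q (cP cC : R) :
 (forall a b c : R, 0 <= a ^+ 2 * A + b ^+ 2 * B + c ^+ 2 * Y + 2 * a * b * X + 2 * a * c * p + 2 * b * c * q) ->
 -1 <= cP -> -1 <= cC -> (cP < 0 -> - cP <= cC) -> (cC < 0 -> - cC <= cP) ->
 cP * (Num.sqrt A * Num.sqrt Y) <= p -> cC * (Num.sqrt B * Num.sqrt Y) <= q ->
 Num.min cP cC * (Num.sqrt (A + 2 * X + B) * Num.sqrt Y) <= p + q.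
Proof.
move=> H hP hC h1 h2 hp hq.
have [le|lt] := leP cP cC.
  exact: geom H hP le h1 hp hq.
have H' : forall a b c : R, 0 <= a ^+ 2 * B + b ^+ 2 * A + c ^+ 2 * Y + 2 * a * b * X + 2 * a * c * q + 2 * b * c * p.
  by move=> a b c; have := H b a c; lra.
have := geom H' hC (ltW lt) h2 hq hp.
by rewrite (addrC q) (_ : B + 2 * X + A = A + 2 * X + B) //; ring.
Qed.

End Alg.

Section AcosLemmas.
Variable R : realType.

Lemma acos_in (x : R) : -1 <= x <= 1 -> x \in `[(-1), 1].
Proof. by move=> h; rewrite in_itv. Qed.

Lemma acos_cmp (x y : R) : -1 <= x <= 1 -> -1 <= y <= 1 ->
  (y < x) = (acos x < acos y).
Proof.
move=> hx hy.
have ax : acos x \in `[0, pi] by rewrite in_itv /= acos_ge0 // acos_lepi.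
have ay : acos y \in `[0, pi] by rewrite in_itv /= acos_ge0 // acos_lepi.
have := ltr_cos ax ay.
by rewrite (acosK (acos_in hx)) (acosK (acos_in hy)).
Qed.

Lemma acos_le_inv (x y : R) : -1 <= x <= 1 -> -1 <= y <= 1 ->
  acos y <= acos x -> x <= y.
Proof.
move=> hx hy h; rewrite leNgt; apply/negP => yx.
by move: yx; rewrite (acos_cmp hx hy) ltNge h.
Qed.

Lemma acos_anti (x y : R) : -1 <= x <= 1 -> -1 <= y <= 1 ->
  x <= y -> acos y <= acos x.
Proof.
move=> hx hy h; rewrite leNgt; apply/negP => yx.
by move: yx; rewrite -(acos_cmp hx hy) ltNge h.
Qed.

Lemma negb11 (x : R) : -1 <= x <= 1 -> -1 <= - x <= 1.
Proof. by move=> /andP [a b]; apply/andP; split; lra. Qed.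

Lemma cond_from_sum (x y : R) : -1 <= x <= 1 -> -1 <= y <= 1 ->
  acos x + acos y <= pi -> x < 0 -> - x <= y.
Proof.
move=> hx hy h _; apply: (acos_le_inv (negb11 hx) hy).
rewrite acosN //; lra.
Qed.

Lemma cond_from_sum' (x y : R) : -1 <= x <= 1 -> -1 <= y <= 1 ->
  acos x + acos y <= pi -> y < 0 -> - y <= x.
Proof. by move=> hx hy h; apply: cond_from_sum => //; rewrite addrC. Qed.

End AcosLemmas.

Section Pointwise.
Variables (R : realType) (n : nat).
Implicit Types x y z : 'rV[R]_n.

Lemma sqn_dotv x : sqn x = dotv x x.
Proof. by rewrite /sqn /dotv; apply: eq_bigr => i _; rewrite expr2. Qed.

Lemma dotvC x y : dotv x y = dotv y x.
Proof. by rewrite /dotv; apply: eq_bigr => i _; rewrite mulrC. Qed.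

Lemma dotvDl x y z : dotv (x + y) z = dotv x z + dotv y z.
Proof. by rewrite /dotv -big_split; apply: eq_bigr => i _; rewrite mxE mulrDl. Qed.

Lemma sqnD x y : sqn (x + y) = dotv x x + 2 * dotv x y + dotv y y.
Proof.
rewrite sqn_dotv dotvDl (dotvC x) (dotvC y) !dotvDl (dotvC y x); ring.
Qed.

Lemma sqn_ge0 x : 0 <= sqn x.
Proof. by rewrite /sqn; apply: sumr_ge0 => i _; apply: sqr_ge0. Qed.

Lemma sqn0 : sqn (0 : 'rV[R]_n) = 0.
Proof. by rewrite /sqn big1 // => i _; rewrite mxE expr0n. Qed.

Lemma absM_le (a b : R) : `|a * b| <= a ^+ 2 + b ^+ 2.
Proof. rewrite ler_norml; apply/andP; split; nra. Qed.

Lemma dotv_bound x y : `|dotv x y| <= sqn x + sqn y.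
Proof.
rewrite /dotv /sqn -big_split; apply: le_trans (ler_norm_sum _ _ _) _.
by apply: ler_sum => i _; apply: absM_le.
Qed.

Lemma quad3 x y z (a b c : R) :
  0 <= a ^+ 2 * dotv x x + b ^+ 2 * dotv y y + c ^+ 2 * dotv z z +
       2 * a * b * dotv x y + 2 * a * c * dotv x z + 2 * b * c * dotv y z.
Proof.
have -> : a ^+ 2 * dotv x x + b ^+ 2 * dotv y y + c ^+ 2 * dotv z z +
       2 * a * b * dotv x y + 2 * a * c * dotv x z + 2 * b * c * dotv y z =
   \sum_(i < n) (a * x 0 i + b * y 0 i + c * z 0 i) ^+ 2.
  rewrite /dotv !mulr_sumr -!big_split /=; apply: eq_bigr => i _; ring.
by apply: sumr_ge0 => i _; apply: sqr_ge0.
Qed.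

Lemma sqn_eq0 x : sqn x = 0 -> x = 0.
Proof.
rewrite /sqn => /eqP; rewrite psumr_eq0; last by move=> i _; apply: sqr_ge0.
move=> /allP h; apply/rowP => i; rewrite mxE.
have := h i (mem_index_enum i); rewrite /= sqrf_eq0 => /eqP; done.
Qed.

End Pointwise.

Section Meas.
Variables (R : realType) (n : nat).
Local Notation mu := (@lebesgue_measure R).
Local Notation signal := (signal R n).
Implicit Types u v w : signal.

Definition Ifn (f : R -> R) : R := fine (\int[mu]_(t in setT) (f t)%:E).
Definition Iok (f : R -> R) := mu.-integrable setT (fun t => (f t)%:E).

Lemma Ifn_ext f g : f =1 g -> Ifn f = Ifn g.
Proof. by move=> h; rewrite /Ifn (_ : f = g) //; apply/funext. Qed.

Lemma L2_meas u i : L2 u -> measurable_fun setT (fun t => u t 0 i).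
Proof. by case=> h _; apply: h. Qed.

Lemma meas_dotv u v : L2 u -> L2 v -> measurable_fun setT (fun t => dotv (u t) (v t)).
Proof.
move=> hu hv; rewrite /dotv; apply: measurable_sum => i.
by apply: measurable_funM; apply: L2_meas.
Qed.

Lemma meas_sqn u : L2 u -> measurable_fun setT (fun t => sqn (u t)).
Proof.
move=> hu; rewrite /sqn; apply: measurable_sum => i.
by apply: measurable_funX; apply: L2_meas.
Qed.

Lemma meas_EFin (f : R -> R) : measurable_fun setT f ->
  measurable_fun setT (fun t => (f t)%:E).
Proof. by move=> mf; apply/measurable_EFinP. Qed.

Lemma Iok_sqn u : L2 u -> Iok (fun t => sqn (u t)).
Proof.
move=> hu; have ms := meas_EFin (meas_sqn hu).
apply/integrableP; split => //.
case: hu => _ hu; apply: le_lt_trans hu.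
apply: ge0_le_integral => //.
- by apply: measurableT_comp.
- by move=> t _; rewrite gee0_abs // lee_fin sqn_ge0.
Qed.

Lemma Iok_add (f g : R -> R) : Iok f -> Iok g -> Iok (fun t => f t + g t).
Proof.
move=> hf hg; have := integrableD measurableT hf hg.
by apply: (eq_integrable measurableT) => t _ /=; rewrite EFinD.
Qed.

Lemma Iok_scale (f : R -> R) a : Iok f -> Iok (fun t => a * f t).
Proof.
move=> hf; have := integrableZl measurableT a hf.
by apply: (eq_integrable measurableT) => t _ /=; rewrite EFinM.
Qed.

Lemma Iok_meas (f : R -> R) : Iok f -> measurable_fun setT f.
Proof. by move=> /integrableP [mf _]; apply/measurable_EFinP. Qed.

Lemma Iok_dotv u v : L2 u -> L2 v -> Iok (fun t => dotv (u t) (v t)).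
Proof.
move=> hu hv.
have hs := Iok_add (Iok_sqn hu) (Iok_sqn hv).
apply: (le_integrable measurableT) hs; first exact: meas_EFin (meas_dotv hu hv).
move=> t _ /=; rewrite lee_fin (ger0_norm (addr_ge0 (sqn_ge0 _) (sqn_ge0 _))).
exact: dotv_bound.
Qed.

Lemma Ilin (f g : R -> R) a : Iok f -> Iok g ->
  Iok (fun t => a * f t + g t) /\ Ifn (fun t => a * f t + g t) = a * Ifn f + Ifn g.
Proof.
move=> hf hg; split; first exact: Iok_add (Iok_scale a hf) hg.
rewrite /Ifn.
under eq_integral => t _ do rewrite EFinD EFinM.
rewrite integralD //; last exact: integrableZl.
rewrite integralZl //.
have ff := integrable_fin_num measurableT hf.
have fg := integrable_fin_num measurableT hg.
by rewrite fineD ?fin_numM // fineM.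
Qed.

Lemma Iok0 : Iok (fun _ => 0).
Proof. exact: integrable0. Qed.

Lemma Ifn0 : Ifn (fun _ => 0) = 0.
Proof. by rewrite /Ifn integral0. Qed.

Lemma Ifn_ge0 (f : R -> R) : (forall t, 0 <= f t) -> 0 <= Ifn f.
Proof. by move=> h; apply: fine_ge0; apply: integral_ge0 => t _; rewrite lee_fin. Qed.

Lemma ipE u v : ip u v = Ifn (fun t => dotv (u t) (v t)).
Proof. by []. Qed.

Lemma norm2_ip u : norm2 u = Num.sqrt (ip u u).
Proof. by rewrite /norm2 /ip; congr (Num.sqrt (fine _)); apply: eq_integral => t _; rewrite sqn_dotv. Qed.

Lemma ipC u v : ip u v = ip v u.
Proof. by rewrite !ipE; apply: Ifn_ext => t; rewrite dotvC. Qed.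

Lemma ipDl u v w : L2 u -> L2 v -> L2 w -> ip (u \+ v) w = ip u w + ip v w.
Proof.
move=> hu hv hw; rewrite !ipE.
have [_ e] := Ilin 1 (Iok_dotv hu hw) (Iok_dotv hv hw).
rewrite mul1r in e; rewrite -e; apply: Ifn_ext => t /=.
by rewrite mul1r dotvDl.
Qed.

Lemma ip_ge0 u : 0 <= ip u u.
Proof. by rewrite ipE; apply: Ifn_ge0 => t; rewrite -sqn_dotv sqn_ge0. Qed.

Lemma gram3 u v w (a b c : R) : L2 u -> L2 v -> L2 w ->
  0 <= a ^+ 2 * ip u u + b ^+ 2 * ip v v + c ^+ 2 * ip w w +
       2 * a * b * ip u v + 2 * a * c * ip u w + 2 * b * c * ip v w.
Proof.
move=> hu hv hw.
have [i6 e6] := Ilin (2 * b * c) (Iok_dotv hv hw) Iok0.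
have [i5 e5] := Ilin (2 * a * c) (Iok_dotv hu hw) i6.
have [i4 e4] := Ilin (2 * a * b) (Iok_dotv hu hv) i5.
have [i3 e3] := Ilin (c ^+ 2) (Iok_dotv hw hw) i4.
have [i2 e2] := Ilin (b ^+ 2) (Iok_dotv hv hv) i3.
have [i1 e1] := Ilin (a ^+ 2) (Iok_dotv hu hu) i2.
rewrite Ifn0 in e6.
rewrite !ipE.
have h := Ifn_ge0 (fun t => quad3 (u t) (v t) (w t) a b c).
set F := (fun t => _) in e1.
have eF : Ifn (fun t => a ^+ 2 * dotv (u t) (u t) + b ^+ 2 * dotv (v t) (v t) +
    c ^+ 2 * dotv (w t) (w t) + 2 * a * b * dotv (u t) (v t) +
    2 * a * c * dotv (u t) (w t) + 2 * b * c * dotv (v t) (w t)) = Ifn F.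
  by apply: Ifn_ext => t; rewrite /F; ring.
rewrite eF e1 e2 e3 e4 e5 e6 in h; lra.
Qed.

Lemma eqae_refl u : eqae u u.
Proof. by apply: (negligibleS _ (negligible_set0 _)) => t /=. Qed.

Lemma eqae_sym u v : eqae u v -> eqae v u.
Proof. by apply: negligibleS => t /= h e; apply: h; rewrite e. Qed.

Lemma eqae_trans u v w : eqae u v -> eqae v w -> eqae u w.
Proof.
move=> h1 h2; apply: (negligibleS _ (negligibleU h1 h2)) => t /= h.
have [e|e] := pselect (u t = v t); last by left.
by right => e'; apply: h; rewrite e e'.
Qed.

Lemma eqae_add u u' v v' : eqae u u' -> eqae v v' -> eqae (u \+ v) (u' \+ v').
Proof.
move=> h1 h2; apply: (negligibleS _ (negligibleU h1 h2)) => t /= h.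
have [e|e] := pselect (u t = u' t); last by left.
by right => e'; apply: h; rewrite e e'.
Qed.

Lemma eqae_sub0 u v : eqae (u \- v) (@sig0 R n) -> eqae u v.
Proof.
apply: negligibleS => t /= h; apply: contra_not h => e.
by move/eqP: e; rewrite /sig0 subr_eq0 => /eqP.
Qed.

Lemma eqae_trunc T u v : eqae u v -> eqae (trunc T u) (trunc T v).
Proof. by apply: negligibleS => t /=; rewrite /trunc; case: ifP. Qed.

Lemma Ifn_ae (f g : R -> R) : measurable_fun setT f -> measurable_fun setT g ->
  (@lebesgue_measure R).-negligible [set t | f t <> g t] -> Ifn f = Ifn g.
Proof.
move=> mf mg [N [mN N0 sub]].
rewrite /Ifn; congr (fine _); apply: ae_eq_integral => //.
- exact: meas_EFin.
- exact: meas_EFin.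
exists N; split => // t /= h; apply: sub => /= e; apply: h => _; by rewrite e.
Qed.

Lemma ip_eqae u u' v : L2 u -> L2 u' -> L2 v -> eqae u u' -> ip u v = ip u' v.
Proof.
move=> hu hu' hv h; rewrite !ipE; apply: Ifn_ae.
- exact: meas_dotv.
- exact: meas_dotv.
by apply: negligibleS h => t /= ne e; apply: ne; rewrite e.
Qed.

Lemma norm2_eqae u u' : L2 u -> L2 u' -> eqae u u' -> norm2 u = norm2 u'.
Proof.
move=> hu hu' h; rewrite !norm2_ip (ip_eqae hu hu' hu h) (ipC u' u).
by rewrite (ip_eqae hu hu' hu' h).
Qed.

Lemma L2_sig0 : L2 (@sig0 R n).
Proof.
split.
  move=> i; rewrite (_ : (fun t : R => @sig0 R n t 0 i) = cst 0); first exact: measurable_cst.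
  by apply/funext => t; rewrite /sig0 mxE.
rewrite (_ : (fun t : R => (sqn (@sig0 R n t))%:E) = cst 0%E).
  by rewrite integral0 ltry.
by apply/funext => t; rewrite /sig0 sqn0.
Qed.

Lemma L2plus_sig0 : L2plus (@sig0 R n).
Proof.
split; first exact: L2_sig0.
by apply: (negligibleS _ (negligible_set0 _)) => t /= [].
Qed.

Lemma trunc_sig0 T : trunc T (@sig0 R n) = @sig0 R n.
Proof. by apply/funext => t; rewrite /trunc; case: ifP. Qed.

Lemma L2e_sig0 : L2e (@sig0 R n).
Proof. by move=> T _; rewrite trunc_sig0; exact: L2plus_sig0. Qed.

Lemma norm2_sig0 : norm2 (@sig0 R n) = 0.
Proof.
rewrite /norm2 (_ : (fun t : R => (sqn (@sig0 R n t))%:E) = cst 0%E).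
  by rewrite integral0 /= sqrtr0.
by apply/funext => t; rewrite /sig0 sqn0.
Qed.

Lemma norm2_eqae0 u : L2 u -> eqae u (@sig0 R n) -> norm2 u = 0.
Proof. by move=> hu h; rewrite (norm2_eqae hu L2_sig0 h) norm2_sig0. Qed.

Definition L2m u := forall i, measurable_fun setT (fun t => u t 0 i).

Lemma meas_sqn' u : L2m u -> measurable_fun setT (fun t => sqn (u t)).
Proof.
move=> hu; rewrite /sqn; apply: measurable_sum => i.
by apply: measurable_funX; apply: hu.
Qed.

Lemma Iok_L2 u : L2m u -> Iok (fun t => sqn (u t)) -> L2 u.
Proof.
move=> hm hI; split => //.
move/integrableP: hI => [_ h]; apply: le_lt_trans h.
have hme := meas_EFin (meas_sqn' hm).
apply: ge0_le_integral => //.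
all: try (by move=> t _; rewrite ?gee0_abs // lee_fin sqn_ge0).
by apply: measurableT_comp.
Qed.

Lemma Iok_ext (f g : R -> R) : f =1 g -> Iok f -> Iok g.
Proof. by move=> h; rewrite (_ : f = g) //; apply/funext. Qed.

Lemma L2_add u v : L2 u -> L2 v -> L2 (u \+ v).
Proof.
move=> hu hv; apply: Iok_L2.
  move=> i; rewrite (_ : (fun t => (u \+ v) t 0 i) = (fun t => u t 0 i) \+ (fun t => v t 0 i)).
    by apply: measurable_funD; apply: L2_meas.
  by apply/funext => t /=; rewrite mxE.
have i1 := Iok_dotv hu hu; have i2 := Iok_dotv hu hv; have i3 := Iok_dotv hv hv.
have := Iok_add (Iok_add i1 (Iok_scale 2 i2)) i3.
apply: Iok_ext => t /=.
by rewrite sqnD.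
Qed.

Lemma ip_self_add u v : L2 u -> L2 v ->
  ip (u \+ v) (u \+ v) = ip u u + 2 * ip u v + ip v v.
Proof.
move=> hu hv; have huv := L2_add hu hv.
rewrite (ipDl hu hv huv) (ipC u) (ipC v) (ipDl hu hv hu) (ipDl hu hv hv).
rewrite (ipC v u); ring.
Qed.

Lemma trunc_comp T u i : (fun t => trunc T u t 0 i) = (fun t => if t <= T then u t 0 i else 0).
Proof. by apply/funext => t; rewrite /trunc; case: ifP => // _; rewrite mxE. Qed.

Lemma sqn_trunc_le T u t : sqn (trunc T u t) <= sqn (u t).
Proof. by rewrite /trunc; case: ifP => // _; rewrite sqn0 sqn_ge0. Qed.

Lemma L2m_trunc T u : L2m u -> L2m (trunc T u).
Proof.
move=> hu i; rewrite trunc_comp; apply: measurable_fun_ifT => //.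
exact: measurable_fun_ler.
Qed.

Lemma L2_trunc T u : L2 u -> L2 (trunc T u).
Proof.
move=> hu; have hm : L2m (trunc T u) by apply: L2m_trunc; case: hu.
split => //; case: hu => hm0 hu; apply: le_lt_trans hu.
apply: ge0_le_integral => //.
- by move=> t _; rewrite lee_fin sqn_ge0.
- exact: meas_EFin (meas_sqn' hm).
- exact: meas_EFin (meas_sqn' hm0).
- by move=> t _; rewrite lee_fin sqn_trunc_le.
Qed.

Lemma L2plus_trunc T u : L2plus u -> L2plus (trunc T u).
Proof.
move=> [hu hn]; split; first exact: L2_trunc.
apply: negligibleS hn => t /= [t0 h]; split => //; move: h; rewrite /trunc.
by case: ifP.
Qed.

Lemma L2plus_L2e u : L2plus u -> L2e u.
Proof. by move=> hu T _; apply: L2plus_trunc. Qed.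

Lemma norm2_ge0 u : 0 <= norm2 u.
Proof. exact: sqrtr_ge0. Qed.

Lemma Ifn_sqn_ge0 u : 0 <= Ifn (fun t => sqn (u t)).
Proof. by apply: Ifn_ge0 => t; apply: sqn_ge0. Qed.

Lemma norm2_sq u : norm2 u ^+ 2 = Ifn (fun t => sqn (u t)).
Proof. by rewrite /norm2 sqr_sqrtr //; apply: Ifn_sqn_ge0. Qed.

Lemma norm2_trunc_le T u : L2 u -> norm2 (trunc T u) <= norm2 u.
Proof.
move=> hu; rewrite /norm2 ler_sqrt; last exact: Ifn_sqn_ge0.
have h1 := integrable_fin_num measurableT (Iok_sqn (L2_trunc T hu)).
have h2 := integrable_fin_num measurableT (Iok_sqn hu).
apply: fine_le => //.
apply: ge0_le_integral => //.
- by move=> t _; rewrite lee_fin sqn_ge0.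
- by case: (L2_trunc T hu) => hm _; exact: meas_EFin (meas_sqn' hm).
- by case: hu => hm _; exact: meas_EFin (meas_sqn' hm).
- by move=> t _; rewrite lee_fin sqn_trunc_le.
Qed.

Lemma norm2_eq0 u : L2 u -> norm2 u = 0 -> eqae u (@sig0 R n).
Proof.
move=> hu h0.
have hf := integrable_fin_num measurableT (Iok_sqn hu).
have hI : (\int[@lebesgue_measure R]_(t in setT) (sqn (u t))%:E = 0)%E.
  apply/eqP; rewrite -(fine_eq0 hf); apply/eqP.
  have := norm2_sq u; rewrite h0 expr0n /= => /esym; done.
have : (\int[@lebesgue_measure R]_(t in setT) `|(sqn (u t))%:E| = 0)%E.
  by rewrite -hI; apply: eq_integral => t _; rewrite gee0_abs // lee_fin sqn_ge0.
case: hu => hm _.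
move=> hI0.
have := (ae_eq_integral_abs (@lebesgue_measure R) measurableT (meas_EFin (meas_sqn' hm))).1 hI0.
move=> [N [mN N0 sub]].
exists N; split => // t /= ne; apply: sub => /= h; apply: ne.
by apply: sqn_eq0; have := h I; rewrite /cst => -[].
Qed.

Lemma trunc_near (w : signal) (t : R) :
  \forall m \near \oo, trunc (m%:R) w t = w t.
Proof.
exists (Num.bound `|t|) => // m /= hm; rewrite /trunc ifT //.
apply: (le_trans (ler_norm t)); apply: ltW; apply: (lt_le_trans (archi_boundP (normr_ge0 t))).
by rewrite ler_nat.
Qed.

Lemma L2plus_of_trunc w K : L2e w -> (forall k : nat, norm2 (trunc k%:R w) <= K) ->
  L2plus w.
Proof.
move=> hw hK.
have hk k : L2plus (trunc k%:R w) by apply: hw; apply: ler0n.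
have hm : L2m w.
  move=> i; apply: (measurable_fun_cvg (h := fun m t => trunc m%:R w t 0 i)).
  - by move=> m; case: (hk m) => [[hm _] _]; exact: hm.
  - move=> t _; apply: cvg_near_cst; near=> m.
    have -> : trunc m%:R w t = w t by near: m; exact: (trunc_near w t).
    by [].
have hg k : L2m (trunc k%:R w) by move=> i; apply: L2m_trunc.
split; last first.
  case: (hk 0%N) => _; apply: negligibleS => t /= [t0 h]; split => //.
  by rewrite /trunc ifT //; apply: ltW.
split => //.
have mg : forall m : nat, measurable_fun setT (fun t => (sqn (trunc m%:R w t))%:E).
  by move=> m; exact: meas_EFin (meas_sqn' (hg m)).
have g0 : forall (m : nat) t, setT t -> (0 <= (sqn (trunc m%:R w t))%:E)%E.
  by move=> m t _; rewrite lee_fin sqn_ge0.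
have nd : forall t, setT t ->
    {homo (fun m : nat => (sqn (trunc m%:R w t))%:E) : a b / (a <= b)%N >-> (a <= b)%E}.
  move=> t _ a b ab; rewrite lee_fin /trunc.
  case: ifP => ta; last by rewrite sqn0; case: ifP => _; rewrite ?sqn0 ?sqn_ge0.
  by rewrite ifT //; apply: (le_trans ta); rewrite ler_nat.
have MC := monotone_convergence (@lebesgue_measure R) measurableT mg g0 nd.
have eqI : (\int[@lebesgue_measure R]_(t in setT) (sqn (w t))%:E =
    \int[@lebesgue_measure R]_(t in setT)
      (fun x => limn (fun m : nat => (sqn (trunc m%:R w x))%:E)) t)%E.
  apply: eq_integral => t _ /=; apply/esym; apply: cvg_lim => //; apply: cvg_near_cst; near=> m.
  have -> : trunc m%:R w t = w t by near: m; exact: (trunc_near w t).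
  by [].
rewrite eqI MC.
apply: (@le_lt_trans _ _ ((K ^+ 2)%:E)); last exact: ltry.
apply: lime_le.
  apply: ereal_nondecreasing_is_cvgn => a b ab; apply: ge0_le_integral => //.
  all: try exact: mg.
  by move=> t _; rewrite lee_fin sqn_ge0.
  by move=> t _; apply: nd.
apply: nearW => m.
have hf' := integrable_fin_num measurableT (Iok_sqn (proj1 (hk m))).
have e := norm2_sq (trunc m%:R w); rewrite /Ifn in e.
rewrite -(fineK hf') lee_fin -e.
have := hK m; have := norm2_ge0 (trunc m%:R w); nra.
Unshelve. all: by end_near.
Qed.

End Meas.

Section Angles.
Variables (R : realType) (n : nat).
Local Notation signal := (signal R n).
Implicit Types u v w y : signal.

Lemma cs u v : L2 u -> L2 v -> `|ip u v| <= norm2 u * norm2 v.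
Proof.
move=> hu hv; rewrite !norm2_ip; apply: psd2_sqrt => a b.
have := gram3 a b 0 hu hv hu; lra.
Qed.

Lemma angle_bound (F : signal -> signal) (hF : forall u, L2plus u -> L2plus (F u)) r :
  angle_set F r -> -1 <= r <= 1.
Proof.
move=> [u [hu [_ [_ ->]]]].
have hv := hF u hu.
have h := cs hu.1 hv.1.
have N0 : 0 <= norm2 u * norm2 (F u) := mulr_ge0 (norm2_ge0 _) (norm2_ge0 _).
have [Nz|Np] := eqVneq (norm2 u * norm2 (F u)) 0.
  by rewrite Nz invr0 mulr0; apply/andP; split; lra.
have Npos : 0 < norm2 u * norm2 (F u) by rewrite lt_neqAle eq_sym Np.
rewrite -ler_norml normrM normfV (ger0_norm N0) ler_pdivrMr // mul1r.
exact: h.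
Qed.

Lemma angle_inf (F : signal -> signal) (hF : forall u, L2plus u -> L2plus (F u)) :
  -1 <= inf (angle_set F) <= 1.
Proof.
have lb : lbound (angle_set F) (-1) by move=> x /(angle_bound hF) /andP[].
have [[r hr]|ne] := pselect (angle_set F !=set0).
  apply/andP; split; first by apply: lb_le_inf => //; exists r.
  apply: le_trans (ge_inf _ hr) _; first by exists (-1).
  by case/andP: (angle_bound hF hr).
have -> : angle_set F = set0.
  by apply/seteqP; split => x // hx; apply: ne; exists x.
by rewrite inf0; apply/andP; split; lra.
Qed.

Lemma angle_ineq (F : signal -> signal) (hF : forall u, L2plus u -> L2plus (F u)) u :
  L2plus u -> inf (angle_set F) * (norm2 u * norm2 (F u)) <= ip u (F u).
Proof.
move=> hu; have hv := hF u hu; have h := cs hu.1 hv.1.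
have N0 : 0 <= norm2 u * norm2 (F u) := mulr_ge0 (norm2_ge0 _) (norm2_ge0 _).
have [Nz|Np] := eqVneq (norm2 u * norm2 (F u)) 0.
  rewrite Nz mulr0; move: h; rewrite Nz ler_norml; lra.
have Npos : 0 < norm2 u * norm2 (F u) by rewrite lt_neqAle eq_sym Np.
have nu : norm2 u != 0 by apply: contraNneq Np => ->; rewrite mul0r.
have nv : norm2 (F u) != 0 by apply: contraNneq Np => ->; rewrite mulr0.
have mem : angle_set F (ip u (F u) / (norm2 u * norm2 (F u))).
  exists u; split => //; split.
    by move=> e; move: nu; rewrite (norm2_eqae0 hu.1 e) eqxx.
  split => //.
  by move=> e; move: nv; rewrite (norm2_eqae0 hv.1 e) eqxx.
have lb : has_lbound (angle_set F).
  by exists (-1) => x /(angle_bound hF) /andP[].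
by have := ge_inf lb mem; rewrite ler_pdivlMr.
Qed.

End Angles.

Section Sys.
Variables (R : realType) (n : nat).
Local Notation signal := (signal R n).
Local Notation S0 := (@sig0 R n).
Implicit Types u v w y : signal.

Lemma stable_sys (F : signal -> signal) : stable F -> is_system F.
Proof. by case=> [[h _] _]. Qed.

Lemma stable_L2p (F : signal -> signal) : stable F -> forall u, L2plus u -> L2plus (F u).
Proof. by case=> _ [h _]. Qed.

Lemma sys_L2e (F : signal -> signal) : is_system F -> forall u, L2e u -> L2e (F u).
Proof. by case. Qed.

Lemma sys_eqae (F : signal -> signal) : is_system F ->
  forall u v, L2e u -> L2e v -> eqae u v -> eqae (F u) (F v).
Proof. by case=> _ []. Qed.

Lemma sys_0 (F : signal -> signal) : is_system F -> eqae (F S0) S0.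
Proof. by case=> _ [_ []]. Qed.

Variables (P C : signal -> signal) (Phi : psig R n -> psig R n).
Hypotheses (hP : stable P) (hC : stable C) (hW : well_posed_with P C Phi)
  (hL : loop_e2_0_stable Phi).

Lemma sqrt_sum_ge (a b : R) : 0 <= a -> a <= Num.sqrt (a ^+ 2 + b ^+ 2).
Proof.
move=> a0; rewrite -{1}(ger0_norm a0) -sqrtr_sqr ler_sqrt; last first.
  by apply: addr_ge0; apply: sqr_ge0.
by rewrite lerDl sqr_ge0.
Qed.

Lemma loop_facts u : L2plus u ->
  [/\ L2plus (Phi (u, S0)).1, L2e (Phi (u, S0)).2,
      eqae ((Phi (u, S0)).1 \+ C (Phi (u, S0)).2) u &
      eqae (Phi (u, S0)).2 (P (Phi (u, S0)).1)].
Proof.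
move=> hu.
have h2 : L2e2 (u, S0) by split; [exact: L2plus_L2e | exact: L2e_sig0].
case: hW => hPhiL2 [_ [hFP _]].
have [hx1 hx2] := hPhiL2 _ h2.
have [e1 e2] := hFP _ h2.
rewrite /fb_map /= in e1 e2.
split => //; last exact: eqae_sub0.
case: hL => c [c0 hc].
apply: (@L2plus_of_trunc _ _ _ (c * norm2 u)) => // k.
have := hc k%:R u (ler0n _ _) (L2plus_L2e hu).
rewrite /norm2p /trunc2 /= trunc_sig0 norm2_sig0 expr0n /= addr0 sqrtr_sqr.
rewrite ger0_norm ?norm2_ge0 // => h.
apply: le_trans (sqrt_sum_ge _ (norm2_ge0 _)) _.
apply: le_trans h _; apply: ler_wpM2l; first exact: ltW.
exact: norm2_trunc_le hu.1.
Qed.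

Lemma G_facts u : L2plus u ->
  [/\ L2plus (Phi (u, S0)).1, L2plus (closed_loop_G P Phi u),
      L2plus (C (closed_loop_G P Phi u)) &
      eqae u ((Phi (u, S0)).1 \+ C (closed_loop_G P Phi u))].
Proof.
move=> hu; have [h1 h2 e1 e2] := loop_facts hu.
have hy : L2plus (closed_loop_G P Phi u) by exact: stable_L2p hP _ h1.
split => //; first exact: stable_L2p hC _ hy.
have e3 : eqae (C (Phi (u, S0)).2) (C (closed_loop_G P Phi u)).
  by apply: (sys_eqae (stable_sys hC)) => //; exact: L2plus_L2e.
exact: eqae_trans (eqae_sym e1) (eqae_add (eqae_refl _) e3).
Qed.

Lemma G_L2p u : L2plus u -> L2plus (closed_loop_G P Phi u).
Proof. by move=> hu; case: (G_facts hu). Qed.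

Lemma G_angle_lb r :
  let cP := inf (angle_set P) in let cC := inf (angle_set C) in
  -1 <= cP -> -1 <= cC -> (cP < 0 -> - cP <= cC) -> (cC < 0 -> - cC <= cP) ->
  angle_set (closed_loop_G P Phi) r -> Num.min cP cC <= r.
Proof.
move=> cP cC h1 h2 h3 h4 [u [hu [nu0 [ny0 ->]]]].
have [hu1 hy hCy eu] := G_facts hu.
set y := closed_loop_G P Phi u in hy hCy eu ny0 *.
set u1 := (Phi (u, S0)).1 in hu1 eu.
have hs := L2_add hu1.1 hCy.1.
have e_ip : ip u y = ip u1 y + ip (C y) y.
  by rewrite (ip_eqae hu.1 hs hy.1 eu) (ipDl hu1.1 hCy.1 hy.1).
have e_n : norm2 u = Num.sqrt (ip u1 u1 + 2 * ip u1 (C y) + ip (C y) (C y)).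
  by rewrite (norm2_eqae hu.1 hs eu) norm2_ip (ip_self_add hu1.1 hCy.1).
have hp := angle_ineq (stable_L2p hP) hu1.
have hq := angle_ineq (stable_L2p hC) hy.
rewrite -/cP -/cC in hp hq.
have ey : P u1 = y by [].
rewrite ey !norm2_ip in hp; rewrite !norm2_ip in hq.
rewrite (mulrC (Num.sqrt (ip y y))) (ipC y) in hq.
have key := geom_min (fun a b c => gram3 a b c hu1.1 hCy.1 hy.1) h1 h2 h3 h4 hp hq.
rewrite -e_n -norm2_ip -e_ip in key.
have nu : norm2 u != 0.
  by apply/eqP => e; apply: nu0; exact: norm2_eq0 hu.1 e.
have ny : norm2 y != 0.
  by apply/eqP => e; apply: ny0; exact: norm2_eq0 hy.1 e.
have Npos : 0 < norm2 u * norm2 y.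
  by rewrite mulr_gt0 // lt_neqAle eq_sym ?nu ?ny norm2_ge0.
by rewrite ler_pdivlMr.
Qed.

Lemma le_bound (t : R) : t <= (Num.bound `|t|)%:R.
Proof.
apply: (le_trans (ler_norm t)); apply: ltW; exact: archi_boundP (normr_ge0 t).
Qed.

Lemma G_nonempty : angle_set (closed_loop_G P Phi) !=set0.
Proof.
apply: contrapT => ne.
have hG : forall u, L2plus u -> ~ eqae u S0 -> eqae (closed_loop_G P Phi u) S0.
  move=> u hu nu; apply: contrapT => ny; apply: ne.
  by exists (ip u (closed_loop_G P Phi u) / (norm2 u * norm2 (closed_loop_G P Phi u))), u.
have sP := stable_sys hP; have sC := stable_sys hC.
have hPu : forall u, L2plus u -> eqae (P u) S0.
  move=> u hu.
  have [e0|ne0] := pselect (eqae u S0).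
    apply: eqae_trans (sys_0 sP).
    by apply: (sys_eqae sP) => //; [exact: L2plus_L2e | exact: L2e_sig0].
  have hy0 := hG u hu ne0.
  have [hu1 hy hCy eu] := G_facts hu.
  have eCy : eqae (C (closed_loop_G P Phi u)) S0.
    apply: eqae_trans (sys_0 sC).
    by apply: (sys_eqae sC) => //; [exact: L2plus_L2e | exact: L2e_sig0].
  have eu1 : eqae u (Phi (u, S0)).1.
    apply: eqae_trans eu _.
    have := eqae_add (eqae_refl (Phi (u, S0)).1) eCy.
    suff -> : (Phi (u, S0)).1 \+ S0 = (Phi (u, S0)).1 by [].
    by apply/funext => t /=; rewrite /sig0 addr0.
  apply: eqae_trans _ hy0.
  by apply: (sys_eqae sP) => //; exact: L2plus_L2e.
case: (sP) => _ [_ [_ nz]]; apply: nz => w hw.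
have hk : forall k : nat, (@lebesgue_measure R).-negligible
    [set t | trunc k%:R (P w) t <> S0 t].
  move=> k.
  have hk0 : (0 : R) <= k%:R := ler0n _ _.
  case: hP => -[_ caus] _.
  have e1 := caus k%:R w hk0 hw.
  have e2 := eqae_trunc k%:R (hPu _ (hw _ hk0)).
  rewrite trunc_sig0 in e2.
  exact: eqae_trans e1 e2.
apply: (negligibleS _ (negligible_bigcup hk)) => t /= ne1.
exists (Num.bound `|t|) => //=.
by rewrite /trunc ifT //; apply: le_bound.
Qed.

End Sys.

Unset Implicit Arguments.

Theorem proposition7 (R : realType) (n : nat) (P C : signal R n -> signal R n)
  (Phi : psig R n -> psig R n) :
  (1 <= n)%N ->
  stable P -> stable C ->
  well_posed_with P C Phi ->
  loop_e2_0_stable Phi ->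
  sangle P + sangle C <= pi ->
  sangle (closed_loop_G P Phi) <= Num.max (sangle P) (sangle C).
Proof.
move=> _ hP hC hW hL hsum.
rewrite /sangle in hsum *.
have bP := angle_inf (stable_L2p hP).
have bC := angle_inf (stable_L2p hC).
have bG := angle_inf (G_L2p hP hC hW hL).
have h3 := cond_from_sum bP bC hsum.
have h4 := cond_from_sum' bP bC hsum.
have /andP [l1 _] := bP.
have /andP [l2 _] := bC.
have mG : Num.min (inf (angle_set P)) (inf (angle_set C)) <=
    inf (angle_set (closed_loop_G P Phi)).
  apply: lb_le_inf; first exact: (G_nonempty hP hC hW hL).
  by move=> r hr; apply: (G_angle_lb hP hC hW hL l1 l2 h3 h4 hr).
move: mG; have [le|lt] := leP (inf (angle_set P)) (inf (angle_set C)) => mG.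
  by rewrite le_max (acos_anti bP bG mG).
by rewrite le_max (acos_anti bC bG mG) orbT.
Qed.
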